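(* Let $\varphi\colon (A,m,K)\to (B,n,L)$ be a local homomorphism of noetherian local rings, let $I$ be a proper ideal of $A$, and let $J$ be a proper ideal of $B$ with $IB\subseteq J$. Let $\varphi_I\colon A/I\to B/IB$ and $\varphi_{I,J}\colon A/I\to B/J$ be the induced local maps, $\pi_{J/IB}\colon B/IB\to B/J$ the canonical surjection, and $\pi_{(J+mB)/mB}\colon B/mB\to B/(J+mB)$ the canonical surjection. Then $$\operatorname{rd}(\varphi_I)+\operatorname{rd}(\pi_{J/IB})-\operatorname{rd}(\varphi_{I,J})=\operatorname{rd}(\pi_{(J+mB)/mB}),$$ and hence $$\operatorname{rd}(\varphi_{I,J})=\operatorname{rd}(\varphi_I)+\operatorname{rd}(\pi_{J/IB})-\operatorname{rd}(\pi_{(J+mB)/mB})=\operatorname{rd}(\varphi)-(\operatorname{rd}(\pi_I)-\operatorname{rd}(\pi_{IB}))+\operatorname{rd}(\pi_{J/IB})-\operatorname{rd}(\pi_{(J+mB)/mB}),$$ where $\pi_I\colon A\to A/I$ and $\pi_{IB}\colon B\to B/IB$ are the canonical surjections.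
   Context: All rings are commutative and noetherian with identity; ring homomorphisms are unital. A local homomorphism $\varphi\colon (A,m,K)\to(B,n,L)$ is a ring homomorphism between local rings with $\varphi(m)\subseteq n$; here $K=A/m$, $L=B/n$. The regularity defect $\operatorname{rd}(\varphi)$ is the $L$-dimension of the kernel of the natural $L$-linear map $m/m^2\otimes_K L\to n/n^2$, $\bar x\otimes\bar b\mapsto \overline{\varphi(x)b}$. *)

(* Defs.v *)
From mathcomp Require Import all_boot all_order all_algebra.
From Stdlib Require Import ClassicalEpsilon.
Set Implicit Arguments. Unset Strict Implicit. Unset Printing Implicit Defensive.
Import GRing.Theory.
Local Open Scope ring_scope.

Section CommAlg.
Variable R : comUnitRingType.

Definition is_idealP (I : R -> Prop) : Prop :=
  [/\ I 0, (forall x y, I x -> I y -> I (x + y)) & (forall r x, I x -> I (r * x))].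

Definition proper_idealP (I : R -> Prop) : Prop := is_idealP I /\ ~ I 1.

Definition maximal_idealP (M : R -> Prop) : Prop :=
  proper_idealP M /\
  forall J, proper_idealP J -> (forall x, M x -> J x) -> forall x, J x -> M x.

Definition local_ring_with (m : R -> Prop) : Prop :=
  maximal_idealP m /\ forall M, maximal_idealP M -> forall x, M x <-> m x.

Definition noetherian : Prop :=
  forall I, is_idealP I -> exists n (g : 'I_n -> R), (forall i, I (g i)) /\
    forall x, I x -> exists c : 'I_n -> R, x = \sum_(i < n) c i * g i.

Definition ideal_span (P : R -> Prop) : R -> Prop :=
  fun x => exists n (r g : 'I_n -> R), (forall i, P (g i)) /\
    x = \sum_(i < n) r i * g i.

Definition ideal_sum (I J : R -> Prop) : R -> Prop :=
  fun z => exists x y, I x /\ J y /\ z = x + y.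

Definition ideal_mul (I J : R -> Prop) : R -> Prop :=
  ideal_span (fun z => exists x y, I x /\ J y /\ z = x * y).

Definition zero_ideal : R -> Prop := fun x => x = 0.
End CommAlg.

Definition ideal_ext (R S : comUnitRingType) (f : R -> S) (I : R -> Prop) : S -> Prop :=
  ideal_span (fun z => exists a, I a /\ z = f a).

(* Regularity defect of the local map R/I -> S/J induced by f : R -> S
   (with f(I) ⊆ J), where (R,m,K), (S,n,L) are local.  The maximal ideal of
   R/I is m/I and its square is (m^2+I)/I, so the cotangent space of R/I is
   m/(m^2+I) as a K-vector space; likewise n/(n^2+J) for S/J.
   We fix a K-basis x_1..x_e of m/(m^2+I) (given by lifts x_i in m), which
   identifies (m/(m^2+I)) ⊗_K L with L^e; an element of L^e is represented by
   lifts b : 'I_e -> S (modulo n).  The kernel of the natural map is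
   { b | sum f(x_i) b_i ∈ n^2 + J }, and its L-dimension is the maximal
   number of elements of it that are L-linearly independent, i.e. independent
   modulo n. *)
Section RD.
Variables (R S : comUnitRingType) (f : R -> S) (m : R -> Prop) (n : S -> Prop).

Definition cot_basis (I : R -> Prop) (e : nat) (x : 'I_e -> R) : Prop :=
  let Q := ideal_sum (ideal_mul m m) I in
  [/\ forall i, m (x i),
      (forall a : 'I_e -> R, Q (\sum_(i < e) a i * x i) -> forall i, m (a i))
    & (forall y, m y -> exists a : 'I_e -> R, Q (y - \sum_(i < e) a i * x i))].

Definition in_kernel (J : S -> Prop) (e : nat) (x : 'I_e -> R) (b : 'I_e -> S) : Prop :=
  ideal_sum (ideal_mul n n) J (\sum_(i < e) f (x i) * b i).

Definition indep_mod_n (e d : nat) (v : 'I_d -> 'I_e -> S) : Prop :=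
  forall c : 'I_d -> S, (forall i, n (\sum_(j < d) c j * v j i)) -> forall j, n (c j).

Definition is_rd (I : R -> Prop) (J : S -> Prop) (r : nat) : Prop :=
  exists e (x : 'I_e -> R), cot_basis I x /\
    (exists v : 'I_r -> 'I_e -> S, (forall j, in_kernel J x (v j)) /\ indep_mod_n v) /\
    (forall d (v : 'I_d -> 'I_e -> S),
        (forall j, in_kernel J x (v j)) -> indep_mod_n v -> (d <= r)%N).

Definition rdq (I : R -> Prop) (J : S -> Prop) : nat :=
  epsilon (inhabits 0%N) (fun r => is_rd I J r).
End RD.

(* Main.v *)
From HB Require Import structures.
Require Import Defs.
From mathcomp Require Import all_boot all_order all_algebra.
From Stdlib Require Import ClassicalEpsilon.
From mathcomp Require Import generic_quotient ring_quotient.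
Set Implicit Arguments. Unset Strict Implicit. Unset Printing Implicit Defensive.
Import GRing.Theory.
Local Open Scope ring_scope.

Section Ideals.
Variable R : comUnitRingType.
Implicit Types I J P : R -> Prop.

Lemma ideal0 I : is_idealP I -> I 0. Proof. by case. Qed.
Lemma idealD I x y : is_idealP I -> I x -> I y -> I (x + y). Proof. by case=> _ h _; apply: h. Qed.
Lemma idealMl I r x : is_idealP I -> I x -> I (r * x). Proof. by case=> _ _ h; apply: h. Qed.
Lemma idealMr I r x : is_idealP I -> I x -> I (x * r). Proof. by move=> hI hx; rewrite mulrC; apply: idealMl. Qed.
Lemma idealN I x : is_idealP I -> I x -> I (- x).
Proof. by move=> hI hx; rewrite -mulN1r; apply: idealMl. Qed.
Lemma idealB I x y : is_idealP I -> I x -> I y -> I (x - y).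
Proof. by move=> hI hx hy; apply: idealD => //; apply: idealN. Qed.
Lemma ideal_sum_big I k (F : 'I_k -> R) : is_idealP I -> (forall i, I (F i)) -> I (\sum_(i < k) F i).
Proof.
move=> hI hF; apply: (big_ind I) => //; [exact: ideal0 | move=> ? ? ? ?; exact: idealD].
Qed.
Lemma ideal_ext_eq I x y : is_idealP I -> I (x - y) -> I y -> I x.
Proof. by move=> hI h1 h2; rewrite -(subrK y x); apply: idealD. Qed.

Lemma ideal_span_sub P x : P x -> ideal_span P x.
Proof.
move=> px; exists 1%N, (fun _ => 1), (fun _ => x); split => //.
by rewrite big_ord1 mul1r.
Qed.

Lemma ideal_span_ideal P : is_idealP (ideal_span P).
Proof.
split.
- exists 0%N, (fun _ => 0), (fun _ => 0); split; [by move=> i; have := ltn_ord i | by rewrite big_ord0].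
- move=> x y [k [r [g [hg ->]]]] [k' [r' [g' [hg' ->]]]].
  exists (k + k')%N, (fun i => match split i with inl j => r j | inr j => r' j end),
    (fun i => match split i with inl j => g j | inr j => g' j end); split.
  + by move=> i; case: (split i).
  + rewrite big_split_ord /=; congr (_ + _); apply: eq_bigr => i _.
    * by have := unsplitK (inl _ i) => /= ->.
    * by have := unsplitK (inr _ i) => /= ->.
- move=> s x [k [r [g [hg ->]]]]; exists k, (fun i => s * r i), g; split => //.
  by rewrite mulr_sumr; apply: eq_bigr => i _; rewrite mulrA.
Qed.

Lemma ideal_span_min P I : is_idealP I -> (forall x, P x -> I x) -> forall x, ideal_span P x -> I x.
Proof.
move=> hI hPI x [k [r [g [hg ->]]]]; apply: ideal_sum_big => // i.
by apply: idealMl => //; apply: hPI.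
Qed.

Lemma ideal_sum_ideal I J : is_idealP I -> is_idealP J -> is_idealP (ideal_sum I J).
Proof.
move=> hI hJ; split.
- by exists 0, 0; rewrite addr0; split; [exact: ideal0 | split; [exact: ideal0 | ]].
- move=> _ _ [a [b [ha [hb ->]]]] [a' [b' [ha' [hb' ->]]]].
  exists (a + a'), (b + b'); split; first exact: idealD.
  by split; [exact: idealD | rewrite addrACA].
- move=> r _ [a [b [ha [hb ->]]]]; exists (r * a), (r * b).
  by split; [exact: idealMl | split; [exact: idealMl | rewrite mulrDr]].
Qed.

Lemma ideal_sum_l I J x : is_idealP J -> I x -> ideal_sum I J x.
Proof. by move=> hJ hx; exists x, 0; split => //; split; [exact: ideal0 | rewrite addr0]. Qed.
Lemma ideal_sum_r I J x : is_idealP I -> J x -> ideal_sum I J x.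
Proof. by move=> hI hx; exists 0, x; split; [exact: ideal0 | split => //; rewrite add0r]. Qed.

Lemma ideal_mul_ideal I J : is_idealP (ideal_mul I J).
Proof. exact: ideal_span_ideal. Qed.
Lemma ideal_mulM I J x y : I x -> J y -> ideal_mul I J (x * y).
Proof. by move=> hx hy; apply: ideal_span_sub; exists x, y. Qed.
Lemma ideal_mul_subl I J x : is_idealP I -> ideal_mul I J x -> I x.
Proof.
move=> hI; apply: ideal_span_min => // _ [a [b [ha [hb ->]]]]; exact: idealMr.
Qed.

Lemma zero_idealP : is_idealP (@zero_ideal R).
Proof.
rewrite /zero_ideal; split => //; first by move=> x y -> ->; rewrite addr0.
by move=> r x ->; rewrite mulr0.
Qed.

Lemma ideal_sum_zero I x : is_idealP I -> ideal_sum I (@zero_ideal R) x -> I x.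
Proof. by move=> hI [a [b [ha [-> ->]]]]; rewrite addr0. Qed.

Lemma mul_sum_in I k (z a : 'I_k -> R) : is_idealP I ->
  (forall i, I (z i)) -> (forall i, I (a i)) -> ideal_mul I I (\sum_(i < k) z i * a i).
Proof.
move=> hI hz ha; apply: ideal_sum_big; first exact: ideal_mul_ideal.
by move=> i; apply: ideal_mulM.
Qed.

Lemma cong_sum I k (z a b : 'I_k -> R) : is_idealP I ->
  (forall i, I (z i)) -> (forall i, I (a i - b i)) ->
  ideal_mul I I (\sum_(i < k) z i * a i - \sum_(i < k) z i * b i).
Proof.
move=> hI hz hab; rewrite -sumrB.
under eq_bigr do rewrite -mulrBr.
exact: mul_sum_in.
Qed.
End Ideals.
Section LinSub.
Variables (F : fieldType) (e : nat).
Implicit Types P : 'rV[F]_e -> Prop.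

Definition lin_closed P :=
  [/\ P 0, (forall u v, P u -> P v -> P (u + v)) & (forall a u, P u -> P (a *: u))].

Lemma lin_closed_mx P : lin_closed P -> exists M : 'M[F]_e, forall v, P v <-> (v <= M)%MS.
Proof.
case=> P0 PD PZ.
pose good (M : 'M[F]_e) := forall v, (v <= M)%MS -> P v.
have good_mul : forall M (u : 'rV_e), good M -> P (u *m M).
  move=> M u gM; apply: gM; exact: submxMl.
case: (classic (exists M, good M /\ forall v, P v -> (v <= M)%MS)) => [[M [gM hM]]|nM].
  by exists M => v; split; [exact: hM | exact: gM].
have step : forall M, good M -> exists M', good M' /\ (\rank M < \rank M')%N.
  move=> M gM.
  have [v [Pv nv]] : exists v, P v /\ ~ (v <= M)%MS.
    apply: NNPP => hn; apply: nM; exists M; split => // v Pv.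
    by apply: NNPP => nv; apply: hn; exists v.
  exists (M + v)%MS; split.
    move=> w /sub_addsmxP [[u1 u2] /= ->]; apply: PD; first exact: gM (submxMl _ _).
    by rewrite [u2]mx11_scalar mul_scalar_mx; apply: PZ.
  have := mxrank_leqif_sup (addsmxSl M v); rewrite addsmx_sub submx_refl /=.
  move=> [le eqi]; rewrite ltn_neqAle le andbT eqi; exact/negP.
have : forall k, exists M, good M /\ (k <= \rank M)%N.
  elim=> [|k [M [gM hk]]].
    exists 0; split => //; move=> v; rewrite submx0 => /eqP ->; exact: P0.
  have [M' [gM' hr]] := step M gM; exists M'; split => //; exact: leq_ltn_trans hr.
move/(_ e.+1) => [M [_ hk]].
by have := leq_trans hk (rank_leq_col M); rewrite ltnn.
Qed.

Definition matP P : 'M[F]_e := epsilon (inhabits 0) (fun M => forall v, P v <-> (v <= M)%MS).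

Lemma matP_spec P : lin_closed P -> forall v, P v <-> (v <= matP P)%MS.
Proof. move=> hP; apply: (epsilon_spec (inhabits 0) (fun M => forall v, P v <-> (v <= M)%MS)); exact: lin_closed_mx. Qed.

Lemma matP_eqmx P (M : 'M[F]_e) : lin_closed P -> (forall v, P v <-> (v <= M)%MS) ->
  (matP P :=: M)%MS.
Proof.
move=> hP hM; apply/eqmxP; apply/andP; split; apply/row_subP => i.
  by apply/hM; apply/matP_spec => //; exact: row_sub.
by apply/matP_spec => //; apply/hM; exact: row_sub.
Qed.

Lemma matP_rank P (M : 'M[F]_e) : lin_closed P -> (forall v, P v <-> (v <= M)%MS) ->
  \rank (matP P) = \rank M.
Proof. by move=> hP hM; rewrite (matP_eqmx hP hM). Qed.

Lemma mx_sub_of P (M : 'M[F]_e) : lin_closed P -> (forall v, P v <-> (v <= M)%MS) ->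
  forall k (A : 'M_(k, e)), (forall i, P (row i A)) -> (A <= M)%MS.
Proof. by move=> hP hM k A hA; apply/row_subP => i; apply/hM. Qed.

Lemma lin_closed_sub P (M : 'M[F]_e) : (forall v, P v <-> (v <= M)%MS) -> lin_closed P.
Proof.
move=> hM; split.
- by apply/hM; exact: sub0mx.
- by move=> u v /hM hu /hM hv; apply/hM; exact: addmx_sub.
- by move=> a u /hM hu; apply/hM; exact: scalemx_sub.
Qed.
End LinSub.
Local Open Scope quotient_scope.
Section Res.
Variables (S : comUnitRingType) (n : S -> Prop) (Hn : maximal_idealP n).

Definition nb (x : S) : bool := if excluded_middle_informative (n x) then true else false.
Lemma nbP x : reflect (n x) (nb x).
Proof. rewrite /nb; case: excluded_middle_informative => h; by constructor. Qed.

Lemma nb_idealr : idealr_closed nb.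
Proof.
case: Hn => [[[h0 hD hM] h1] _]; split.
- exact/nbP.
- by apply/nbP.
- move=> a u v /nbP hu /nbP hv; apply/nbP; apply: hD => //; exact: hM.
Qed.

HB.instance Definition _ := isIdealr.Build S nb nb_idealr.

Definition RF0 := {ideal_quot (nb : idealr S)}.
Definition red (x : S) : RF0 := \pi_RF0 x.

Lemma red_eq x y : (red x == red y) = nb (x - y).
Proof. by rewrite /red -Quotient.idealrBE. Qed.

Lemma redK (k : RF0) : red (repr k) = k.
Proof. exact: reprK. Qed.

Lemma redD x y : red (x + y) = red x + red y.
Proof. by rewrite /red rmorphD. Qed.
Lemma redM x y : red (x * y) = red x * red y.
Proof. by rewrite /red rmorphM. Qed.
Lemma red1 : red 1 = 1.
Proof. by rewrite /red rmorph1. Qed.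
Lemma red0 : red 0 = 0.
Proof. by rewrite /red rmorph0. Qed.

Lemma red_eq0 x : red x = 0 <-> n x.
Proof.
rewrite -red0; split => [h|h]; first by apply/nbP; rewrite -[x]subr0 -red_eq h.
by apply/eqP; rewrite red_eq subr0; apply/nbP.
Qed.

Lemma inv_mod x : ~ n x -> exists y, n (y * x - 1).
Proof.
case: (Hn) => [[[h0 hD hM] h1] hmax] nx.
pose Jx := fun z => exists a b, n a /\ z = a + b * x.
case: (classic (Jx 1)) => [[a [b [na e]]]|nJ].
- exists b; have -> : b * x - 1 = - a by rewrite e opprD addrCA subrr addr0.
  by rewrite -mulN1r; apply: hM.
- exfalso; apply: nx; apply: (hmax Jx); last by exists 0, 1; rewrite add0r mul1r.
  + split => //; split.
    * by exists 0, 0; rewrite mul0r addr0.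
    * move=> u v [a [b [na ->]]] [a' [b' [na' ->]]]; exists (a + a'), (b + b'); split; first exact: hD.
      by rewrite mulrDl addrACA.
    * move=> r u [a [b [na ->]]]; exists (r * a), (r * b); split; first exact: hM.
      by rewrite mulrDr mulrA.
  + by move=> z nz; exists z, 0; rewrite mul0r addr0.
Qed.

Definition RFinv (k : RF0) : RF0 :=
  if k == 0 then 0 else red (epsilon (inhabits 0) (fun y => n (y * repr k - 1))).

Lemma RF_mulVf (k : RF0) : k != 0 -> RFinv k * k = 1.
Proof.
move=> k0; rewrite /RFinv (negbTE k0).
have nk : ~ n (repr k) by move/red_eq0; rewrite redK => e; rewrite e eqxx in k0.
have := epsilon_spec (inhabits 0) _ (inv_mod nk).
set y := epsilon _ _ => hy.
rewrite -[k in _ * k]redK -redM; apply/eqP; rewrite -red1 red_eq; exact/nbP.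
Qed.

Lemma RF_inv0 : RFinv 0 = 0.
Proof. by rewrite /RFinv eqxx. Qed.

HB.instance Definition _ := GRing.ComNzRing_isField.Build {ideal_quot (nb : idealr S)} RF_mulVf RF_inv0.
Definition RF : fieldType := {ideal_quot (nb : idealr S)}.

Lemma red_sum k (G : 'I_k -> S) : red (\sum_(i < k) G i) = \sum_(i < k) (red (G i) : RF).
Proof. by rewrite /red raddf_sum. Qed.

Lemma red_eqP x y : red x = red y <-> n (x - y).
Proof. by split => [/eqP|h]; [rewrite red_eq => /nbP | apply/eqP; rewrite red_eq; apply/nbP]. Qed.

Lemma repr_red x : n (repr (red x : RF) - x).
Proof. by apply/red_eqP; rewrite redK. Qed.

Definition rowv e (b : 'I_e -> S) : 'rV[RF]_e := \row_i red (b i).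

Lemma red_rowv_mul k e (c : 'I_k -> S) (v : 'I_k -> 'I_e -> S) (V : 'M[RF]_(k, e)) :
  (forall j i, V j i = red (v j i)) ->
  forall i, (rowv c *m V) 0 i = red (\sum_(j < k) c j * v j i).
Proof.
move=> hV i; rewrite !mxE red_sum; apply: eq_bigr => j _; by rewrite !mxE hV redM.
Qed.

Lemma indep_fam e (M : 'M[RF]_e) (Pb : ('I_e -> S) -> Prop) :
  (forall b, Pb b <-> (rowv b <= M)%MS) ->
  exists v : 'I_(\rank M) -> 'I_e -> S, (forall j, Pb (v j)) /\ indep_mod_n n v.
Proof.
move=> hP; exists (fun j i => repr (row_base M j i)); split.
  move=> j; apply/hP.
  have -> : rowv (fun i => repr (row_base M j i)) = row j (row_base M).
    by apply/rowP => i; rewrite !mxE redK.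
  by rewrite -(eq_row_base M) row_sub.
move=> c hc j.
have h0 : rowv c *m row_base M = 0.
  apply/rowP => i; rewrite (@red_rowv_mul _ _ c (fun j i => repr (row_base M j i))); last by move=> ? ?; rewrite redK.
  by rewrite mxE; apply/red_eq0.
move/eqP: h0; rewrite mulmx_free_eq0 ?row_base_free // => /eqP /rowP /(_ j).
by rewrite !mxE => /red_eq0.
Qed.

Lemma indep_bound e (M : 'M[RF]_e) (Pb : ('I_e -> S) -> Prop) :
  (forall b, Pb b <-> (rowv b <= M)%MS) ->
  forall d (v : 'I_d -> 'I_e -> S), (forall j, Pb (v j)) -> indep_mod_n n v -> (d <= \rank M)%N.
Proof.
move=> hP d v hv hind.
pose V := \matrix_(j < d, i < e) red (v j i).
have hrow : forall j, row j V = rowv (v j) by move=> j; apply/rowP => i; rewrite !mxE.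
have VM : (V <= M)%MS by apply/row_subP => j; rewrite hrow; apply/hP.
have fV : row_free V.
  rewrite -kermx_eq0 -submx0; apply/row_subP => r; rewrite submx0.
  set w := row r (kermx V).
  have wV : w *m V = 0 by apply/sub_kermxP; exact: row_sub.
  apply/eqP/rowP => j; rewrite [RHS]mxE.
  have hc := hind (fun j => repr (w 0 j)).
  have : n (repr (w 0 j)).
    apply: hc => i; apply/red_eq0.
    rewrite -(@red_rowv_mul _ _ (fun j => repr (w 0 j)) v V); last by move=> ? ?; rewrite mxE.
    have -> : rowv (fun j => repr (w 0 j)) = w by apply/rowP => k; rewrite !mxE redK.
    by rewrite wV mxE.
  by move/red_eq0; rewrite redK.
by move/eqP: fV => <-; exact: mxrankS.
Qed.


Lemma n_ideal : is_idealP n. Proof. by case: Hn => [[]]. Qed.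

Definition Qn (N : S -> Prop) := ideal_sum (ideal_mul n n) N.

Lemma Qn_ideal N : is_idealP N -> is_idealP (Qn N).
Proof. by move=> hN; apply: ideal_sum_ideal => //; exact: ideal_mul_ideal. Qed.

Lemma Qn_n2 N x : is_idealP N -> ideal_mul n n x -> Qn N x.
Proof. by move=> hN hx; apply: ideal_sum_l. Qed.

Lemma Qn_cong N x y : is_idealP N -> ideal_mul n n (x - y) -> Qn N x <-> Qn N y.
Proof.
move=> hN hxy; split => h.
  have -> : y = x - (x - y) by rewrite opprB addrC subrK.
  by apply: idealB; [exact: Qn_ideal | exact: h | exact: Qn_n2].
by rewrite -(subrK y x); apply: idealD; [exact: Qn_ideal | exact: Qn_n2 | exact: h].
Qed.

Definition Kz e (z : 'I_e -> S) (N : S -> Prop) : 'rV[RF]_e -> Prop :=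
  fun l => Qn N (\sum_(i < e) z i * repr (l 0 i)).

Section KzSec.
Variables (e : nat) (z : 'I_e -> S) (N : S -> Prop).
Hypotheses (zn : forall i, n (z i)) (hN : is_idealP N).

Lemma Kz_any (l : 'rV[RF]_e) (s : 'I_e -> S) : (forall i, red (s i) = l 0 i) ->
  Kz z N l <-> Qn N (\sum_(i < e) z i * s i).
Proof.
move=> hs; apply: Qn_cong => //; apply: cong_sum => //; first exact: n_ideal.
by move=> i; apply/red_eqP; rewrite redK hs.
Qed.

Lemma Kz_row b : Kz z N (rowv b) <-> Qn N (\sum_(i < e) z i * b i).
Proof. by apply: Kz_any => i; rewrite mxE. Qed.

Lemma Kz_lin : lin_closed (Kz z N).
Proof.
split.
- have hs : forall i, red ((fun _ => 0) i) = (0 : 'rV[RF]_e) 0 i by move=> i; rewrite mxE red0.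
  apply/(Kz_any hs).
  rewrite big1; first exact: (ideal0 (Qn_ideal hN)).
  by move=> i _; rewrite mulr0.
- move=> u v hu hv.
  have hs : forall i, red ((fun i => repr (u 0 i) + repr (v 0 i)) i) = (u + v) 0 i.
    by move=> i; rewrite redD !redK mxE.
  apply/(Kz_any hs).
  under eq_bigr do rewrite mulrDr.
  by rewrite big_split /=; apply: idealD => //; exact: Qn_ideal.
- move=> a u hu.
  have hs : forall i, red ((fun i => repr a * repr (u 0 i)) i) = (a *: u) 0 i.
    by move=> i; rewrite redM !redK mxE.
  apply/(Kz_any hs).
  under eq_bigr do rewrite mulrCA.
  by rewrite -mulr_sumr; apply: idealMl => //; exact: Qn_ideal.
Qed.

Lemma Kz_spec (l : 'rV[RF]_e) : Kz z N l <-> (l <= matP (Kz z N))%MS.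
Proof. exact: matP_spec Kz_lin l. Qed.
End KzSec.

Lemma is_rd_char (R : comUnitRingType) (f : R -> S) (m : R -> Prop) (I N : _ -> Prop)
  (fm : forall a, m a -> n (f a)) (hN : is_idealP N) r :
  is_rd f m n I N r <-> exists e (x : 'I_e -> R), cot_basis m I x /\
     r = \rank (matP (Kz (fun i => f (x i)) N)).
Proof.
have key : forall e (x : 'I_e -> R), cot_basis m I x -> forall b,
    in_kernel f n N x b <-> (rowv b <= matP (Kz (fun i => f (x i)) N))%MS.
  move=> e x [xm _ _] b; rewrite -Kz_spec //; last by move=> i; apply: fm.
  rewrite Kz_row //; by move=> i; apply: fm.
split.
- move=> [e [x [cx [[v [hv iv]] hb]]]]; exists e, x; split => //.
  apply/eqP; rewrite eqn_leq; apply/andP; split.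
    exact: (indep_bound (key e x cx) hv iv).
  have [w [hw iw]] := indep_fam (key e x cx); exact: hb hw iw.
- move=> [e [x [cx ->]]]; exists e, x; split => //; split.
    exact: (indep_fam (key e x cx)).
  move=> d v hv iv; exact: (indep_bound (key e x cx) hv iv).
Qed.

Lemma redB x y : red (x - y) = red x - red y :> RF.
Proof. by rewrite /red rmorphB. Qed.

Lemma red_nat k : red k%:R = k%:R :> RF.
Proof. by rewrite /red rmorph_nat. Qed.

End Res.

Lemma Qn_cong2 (T : comUnitRingType) (n N : T -> Prop) a b : is_idealP N ->
  Qn n N (a - b) -> (Qn n N a <-> Qn n N b).
Proof.
move=> hN hab; have hQ := Qn_ideal n hN; split => h.
  have -> : b = a - (a - b) by rewrite opprB addrC subrK.
  exact: idealB.
by rewrite -(subrK b a); apply: idealD.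
Qed.
Lemma fchoice (A B : Type) (b0 : B) (P : A -> B -> Prop) :
  (forall a, exists b, P a b) -> exists g : A -> B, forall a, P a (g a).
Proof.
move=> h; exists (fun a => epsilon (inhabits b0) (P a)) => a; apply: epsilon_spec; exact: h.
Qed.

Lemma sum_delta (T : comUnitRingType) p (k : 'I_p) (v : 'I_p -> T) :
  \sum_(j < p) (k == j)%:R * v j = v k.
Proof.
rewrite (bigD1 k) //= eqxx mul1r big1 ?addr0 // => j hj.
by rewrite eq_sym (negbTE hj) mul0r.
Qed.

Lemma preimage_ideal (R S : comUnitRingType) (f : {rmorphism R -> S}) (J : S -> Prop) :
  is_idealP J -> is_idealP (fun a => J (f a)).
Proof.
move=> hJ; split.
- by rewrite rmorph0; exact: ideal0.
- by move=> x y hx hy; rewrite rmorphD; exact: idealD.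
- by move=> r x hx; rewrite rmorphM; exact: idealMl.
Qed.

Definition spanning (R : comUnitRingType) (m I : R -> Prop) e (x : 'I_e -> R) :=
  (forall i, m (x i)) /\ forall y, m y -> exists a : 'I_e -> R, Qn m I (y - \sum_(i < e) a i * x i).

Lemma cot_spanning (R : comUnitRingType) (m I : R -> Prop) e (x : 'I_e -> R) :
  cot_basis m I x -> spanning m I x.
Proof. by case. Qed.

Section Transfer.
Variables (R S : comUnitRingType) (f : {rmorphism R -> S}) (m : R -> Prop) (n : S -> Prop).
Variables (I : R -> Prop) (N : S -> Prop).
Hypotheses (hm : is_idealP m) (hn : is_idealP n) (hI : is_idealP I) (hN : is_idealP N).
Hypotheses (fm : forall a, m a -> n (f a)) (fIN : forall a, I a -> N (f a)).

Lemma f_mul a : ideal_mul m m a -> ideal_mul n n (f a).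
Proof.
apply: (@ideal_span_min R _ (fun a => ideal_mul n n (f a))); first exact: (preimage_ideal f (ideal_mul_ideal n n)).
move=> _ [u [v [hu [hv ->]]]]; rewrite rmorphM; apply: ideal_mulM; exact: fm.
Qed.

Lemma f_Q a : Qn m I a -> Qn n N (f a).
Proof.
move=> [u [v [hu [hv ->]]]]; rewrite rmorphD; exists (f u), (f v).
by split; [exact: f_mul | split; [exact: fIN |]].
Qed.

Lemma transfer p q (y : 'I_p -> R) (x : 'I_q -> R) (c : 'I_p -> 'I_q -> R)
  (hyx : forall k, Qn m I (y k - \sum_(i < q) c k i * x i)) (r : 'I_p -> S) :
  Qn n N (\sum_(k < p) f (y k) * r k - \sum_(i < q) f (x i) * (\sum_(k < p) f (c k i) * r k)).
Proof.
have -> : \sum_(i < q) f (x i) * (\sum_(k < p) f (c k i) * r k) =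
          \sum_(k < p) f (\sum_(i < q) c k i * x i) * r k.
  under eq_bigr do rewrite mulr_sumr.
  rewrite exchange_big /=; apply: eq_bigr => k _.
  rewrite rmorph_sum mulr_suml; apply: eq_bigr => i _.
  by rewrite rmorphM mulrCA mulrA.
rewrite -sumrB; apply: ideal_sum_big; first exact: Qn_ideal.
move=> k; rewrite -mulrBl -rmorphB; apply: idealMr; first exact: Qn_ideal.
exact: f_Q.
Qed.
End Transfer.
Section SF.
Variables (R S : comUnitRingType) (f : {rmorphism R -> S}) (m : R -> Prop) (n : S -> Prop).
Variables (Hm : maximal_idealP m) (Hn : maximal_idealP n).
Variables (I : R -> Prop) (N : S -> Prop).
Hypotheses (hI : is_idealP I) (hN : is_idealP N).
Hypotheses (fm : forall a, m a -> n (f a)) (fIN : forall a, I a -> N (f a)).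

Lemma sf_core e (x : 'I_e -> R) (xs : spanning m I x) e' (x' : 'I_e' -> R) (cx : cot_basis m I x') :
  (\rank (matP (Kz (Hn := Hn) (fun i => f (x' i)) N)) + \rank (matP (Kz (Hn := Hm) x I)))%N
   = \rank (matP (Kz (Hn := Hn) (fun i => f (x i)) N)).
Proof.
case: xs => xm xsp; case: cx => x'm x'ind x'sp.
have [c hc] : exists c : 'I_e' -> 'I_e -> R, forall k, Qn m I (x' k - \sum_(i < e) c k i * x i).
  have [g hg] := @fchoice _ _ (fun _ => 0) (fun k a => Qn m I (x' k - \sum_(i < e) a i * x i)) (fun k => xsp _ (x'm k)).
  by exists g.
have [d hd] : exists d : 'I_e -> 'I_e' -> R, forall i, Qn m I (x i - \sum_(k < e') d i k * x' k).
  have [g hg] := @fchoice _ _ (fun _ => 0) (fun i a => Qn m I (x i - \sum_(k < e') a k * x' k)) (fun i => x'sp _ (xm i)).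
  by exists g.
have hQ := Qn_ideal m hI.
have hcd : forall k j, m (\sum_(i < e) c k i * d i j - (k == j)%:R).
  move=> k; apply: x'ind.
  have t : Qn m I (\sum_(i < e) x i * c k i - \sum_(j < e') x' j * (\sum_(i < e) d i j * c k i)) :=
    transfer (f := idfun) (n := m) (N := I) hI (fun a h => h) (fun a h => h) hd (fun i => c k i).
  set P := \sum_(j < e') x' j * (\sum_(i < e) d i j * c k i).
  set X := \sum_(i < e) c k i * x i.
  have e1 : \sum_(j < e') (\sum_(i < e) c k i * d i j - (k == j)%:R) * x' j = P - x' k.
    under eq_bigr do rewrite mulrBl.
    rewrite sumrB sum_delta /P; congr (_ - _); apply: eq_bigr => j _.
    by rewrite mulrC; congr (_ * _); apply: eq_bigr => i _; rewrite mulrC.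
  have e2 : \sum_(i < e) x i * c k i = X by apply: eq_bigr => i _; rewrite mulrC.
  rewrite e1; rewrite e2 in t.
  have -> : P - x' k = - ((X - P) + (x' k - X)) by rewrite opprD !opprB addrA subrK.
  by apply: idealN => //; apply: idealD => //; exact: hc.
pose D := \matrix_(i < e, j < e') (red Hm (d i j)).
pose C := \matrix_(k < e', i < e) (red Hm (c k i)).
pose Dt := \matrix_(i < e, j < e') (red Hn (f (d i j))).
pose Ct := \matrix_(k < e', i < e) (red Hn (f (c k i))).
have CD : C *m D = 1%:M.
  apply/matrixP => k j; rewrite !mxE -(red_nat Hm).
  have := (proj2 (red_eqP Hm _ _)) (hcd k j) => <-.
  rewrite red_sum; apply: eq_bigr => i _; by rewrite redM !mxE.
have CDt : Ct *m Dt = 1%:M.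
  apply/matrixP => k j; rewrite !mxE -(red_nat Hn).
  have := fm (hcd k j); rewrite rmorphB rmorph_nat rmorph_sum.
  move/(red_eqP Hn) => <-.
  rewrite red_sum; apply: eq_bigr => i _; by rewrite rmorphM redM !mxE.
have rkD : \rank D = e'.
  apply/eqP; rewrite eqn_leq rank_leq_col /=.
  by rewrite -{1}(mxrank1 (RF Hm) e') -CD; exact: mxrankM_maxr.
have rkDt : \rank Dt = e'.
  apply/eqP; rewrite eqn_leq rank_leq_col /=.
  by rewrite -{1}(mxrank1 (RF Hn) e') -CDt; exact: mxrankM_maxr.
have fCt : row_free Ct.
  rewrite /row_free eqn_leq rank_leq_row /=.
  by rewrite -{1}(mxrank1 (RF Hn) e') -CDt; exact: mxrankM_maxl.
have zfn : forall i, n (f (x i)) by move=> i; apply: fm.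
have zfn' : forall i, n (f (x' i)) by move=> i; apply: fm.
have relE : forall k : 'rV[RF Hm]_e, Kz (Hn := Hm) x I k <-> (k <= kermx D)%MS.
  move=> k; set r := fun i => repr (k 0 i).
  have t : Qn m I (\sum_(i < e) x i * r i - \sum_(j < e') x' j * (\sum_(i < e) d i j * r i)) :=
    transfer (f := idfun) (n := m) (N := I) hI (fun a h => h) (fun a h => h) hd r.
  rewrite /Kz -/r (Qn_cong2 hI t).
  have red_t : forall j, red Hm (\sum_(i < e) d i j * r i) = (k *m D) 0 j.
    move=> j; rewrite red_sum mxE; apply: eq_bigr => i _; by rewrite redM redK mxE mulrC.
  split => h.
  - apply/sub_kermxP/rowP => j; rewrite [RHS]mxE -red_t; apply/red_eq0.
    apply: (x'ind (fun j => \sum_(i < e) d i j * r i)).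
    by rewrite (eq_bigr (fun j => x' j * \sum_(i < e) d i j * r i)) // => j' _; rewrite mulrC.
  - move/sub_kermxP: h => h; apply: Qn_n2 => //; apply: mul_sum_in; first exact: n_ideal Hm.
      by move=> j; apply: x'm.
    move=> j; apply/red_eq0; by rewrite red_t h mxE.
have claimA : forall l' : 'rV[RF Hn]_e',
    Kz (Hn := Hn) (fun i => f (x' i)) N l' <-> Kz (Hn := Hn) (fun i => f (x i)) N (l' *m Ct).
  move=> l'; set r := fun k => repr (l' 0 k).
  have t := transfer hN fm fIN hc r.
  have hs : forall i, red Hn (\sum_(k < e') f (c k i) * r k) = (l' *m Ct) 0 i.
    move=> i; rewrite red_sum mxE; apply: eq_bigr => k _; by rewrite redM redK mxE mulrC.
  rewrite (Kz_any zfn hN hs); exact: Qn_cong2 hN t.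
have claimB : forall l : 'rV[RF Hn]_e, l *m Dt = 0 -> Kz (Hn := Hn) (fun i => f (x i)) N l.
  move=> l hl; set r := fun i => repr (l 0 i).
  have t := transfer hN fm fIN hd r.
  rewrite /Kz -/r (Qn_cong2 hN t).
  apply: Qn_n2 => //; apply: mul_sum_in; first exact: n_ideal Hn.
    by move=> j; apply: fm.
  move=> j; apply/red_eq0; move/rowP: hl => /(_ j); rewrite !mxE => <-.
  rewrite red_sum; apply: eq_bigr => i _; by rewrite redM redK !mxE mulrC.
have specK := Kz_spec (Hn := Hn) zfn hN.
have specK' := Kz_spec (Hn := Hn) zfn' hN.
set MK := matP (Kz (fun i => f (x i)) N) in specK *.
set MK' := matP (Kz (fun i => f (x' i)) N) in specK' *.
have rRel : \rank (matP (Kz (Hn := Hm) x I)) = (e - e')%N.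
  by rewrite (matP_rank (Kz_lin Hm xm hI) relE) mxrank_ker rkD.
have kerDt : (kermx Dt <= MK)%MS.
  apply/row_subP => i; apply/specK; apply: claimB; apply/sub_kermxP; exact: row_sub.
have E1 : (MK' *m Ct == MK :&: Ct)%MS.
  apply/andP; split.
  - rewrite sub_capmx submxMl andbT; apply/row_subP => i; rewrite row_mul.
    by apply/specK; apply/claimA; apply/specK'; exact: row_sub.
  - apply/row_subP => i; set v := row i (MK :&: Ct)%MS.
    have : (v <= MK :&: Ct)%MS by exact: row_sub.
    rewrite sub_capmx => /andP [v1 /submxP [t vt]].
    rewrite vt; apply: submxMr; apply/specK'; apply/claimA; rewrite -vt; exact/specK.
have E2 : (MK *m Dt *m Ct == MK :&: Ct)%MS.
  apply/andP; split.
  - rewrite sub_capmx submxMl andbT.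
    have h0 : (MK - MK *m Dt *m Ct) *m Dt = 0.
      by rewrite mulmxBl -(mulmxA (MK *m Dt)) CDt mulmx1 subrr.
    have h1 : (MK - MK *m Dt *m Ct <= MK)%MS.
      by apply: submx_trans kerDt; apply/sub_kermxP.
    have -> : MK *m Dt *m Ct = MK + - (MK - MK *m Dt *m Ct) by rewrite opprB addrC subrK.
    by apply: addmx_sub; [exact: submx_refl | rewrite -scaleN1r; exact: scalemx_sub].
  - apply/row_subP => i; set v := row i (MK :&: Ct)%MS.
    have : (v <= MK :&: Ct)%MS by exact: row_sub.
    rewrite sub_capmx => /andP [v1 /submxP [t vt]].
    have vv : v *m Dt *m Ct = v by rewrite vt -(mulmxA t Ct Dt) CDt mulmx1.
    by rewrite -vv; apply: submxMr; apply: submxMr.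
have r1 : \rank MK' = \rank (MK *m Dt).
  rewrite -(mxrankMfree MK' fCt) (eqmxP E1) -(eqmxP E2).
  exact: mxrankMfree.
have r2 := mxrank_mul_ker MK Dt.
rewrite (capmx_idPr kerDt) mxrank_ker rkDt in r2.
by rewrite rRel r1.
Qed.
End SF.
Lemma sum_swap (T : comUnitRingType) p q (b : 'I_p -> T) (g : 'I_p -> 'I_q -> T) (x : 'I_q -> T) :
  \sum_(k < p) b k * (\sum_(i < q) g k i * x i) = \sum_(i < q) (\sum_(k < p) b k * g k i) * x i.
Proof.
under eq_bigr do rewrite mulr_sumr.
rewrite exchange_big /=; apply: eq_bigr => i _.
by rewrite mulr_suml; apply: eq_bigr => k _; rewrite mulrA.
Qed.

Lemma sum_comm (T : comUnitRingType) q (a x : 'I_q -> T) :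
  \sum_(i < q) a i * x i = \sum_(i < q) x i * a i.
Proof. by apply: eq_bigr => i _; rewrite mulrC. Qed.

Lemma cot_exists (R : comUnitRingType) (m : R -> Prop) (Hm : maximal_idealP m) (I : R -> Prop)
  (hI : is_idealP I) e (x : 'I_e -> R) (xs : spanning m I x) :
  exists e' (x' : 'I_e' -> R), cot_basis m I x'.
Proof.
case: (xs) => xm xsp.
have hmI := n_ideal Hm.
have hQ := Qn_ideal m hI.
set Rel := matP (Kz (Hn := Hm) x I).
have specR := Kz_spec (Hn := Hm) xm hI.
set Cb := row_base (Rel^C)%MS.
pose g := fun k i => repr (Cb k i).
exists (\rank (Rel^C)%MS), (fun k => \sum_(i < e) g k i * x i); split.
- move=> k; apply: ideal_sum_big => // i; exact: idealMl.
- move=> a ha.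
  set w := rowv Hm a *m Cb.
  have hs : forall i, red Hm (\sum_(k < _) a k * g k i) = w 0 i.
    move=> i; rewrite red_sum mxE; apply: eq_bigr => k _; by rewrite redM redK !mxE.
  have wR : (w <= Rel)%MS.
    apply/specR; apply/(Kz_any xm hI hs); by rewrite sum_comm -sum_swap.
  have wC : (w <= Rel^C)%MS by rewrite -(eq_row_base (Rel^C)%MS) submxMl.
  have : (w <= Rel :&: Rel^C)%MS by rewrite sub_capmx wR wC.
  rewrite capmx_compl submx0 mulmx_free_eq0 ?row_base_free // => /eqP /rowP h k.
  by have := h k; rewrite !mxE => /red_eq0.
- move=> y my; have [a ha] := xsp y my.
  set u := rowv Hm a.
  have : (u <= Rel + Rel^C)%MS.
    by apply: submx_trans (submx1 u) _; rewrite sub1mx addsmx_compl_full.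
  case/sub_addsmxP => [[u1 u2] /= hu].
  have : (u2 *m Rel^C <= Cb)%MS by rewrite (eq_row_base (Rel^C)%MS) submxMl.
  case/submxP => t ht.
  exists (fun k => repr (t 0 k)).
  set s := fun i => \sum_(k < _) repr (t 0 k) * g k i.
  have e1 : u1 *m Rel = u - t *m Cb by rewrite hu -ht addrK.
  have hs : forall i, red Hm (a i - s i) = (u1 *m Rel) 0 i.
    move=> i; rewrite e1 !mxE redB /s red_sum; congr (_ - _).
    by apply: eq_bigr => k _; rewrite redM !redK.
  have hq : Kz (Hn := Hm) x I (u1 *m Rel) by apply/specR; exact: submxMl.
  move/(Kz_any xm hI hs): hq => hq.
  rewrite sum_swap -/s.
  have -> : y - \sum_(i < e) s i * x i =
            (y - \sum_(i < e) a i * x i) + \sum_(i < e) x i * (a i - s i).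
    rewrite (sum_comm (fun i => x i)) .
    under [X in _ = _ + X]eq_bigr do rewrite mulrBl.
    by rewrite sumrB addrA subrK.
  exact: idealD.
Qed.
Lemma rdq_formula (R S : comUnitRingType) (f : {rmorphism R -> S}) (m : R -> Prop) (n : S -> Prop)
  (Hm : maximal_idealP m) (Hn : maximal_idealP n) (I : R -> Prop) (N : S -> Prop)
  (hI : is_idealP I) (hN : is_idealP N)
  (fm : forall a, m a -> n (f a)) (fIN : forall a, I a -> N (f a))
  e (x : 'I_e -> R) (xs : spanning m I x) :
  (rdq f m n I N + \rank (matP (Kz (Hn := Hm) x I)))%N
    = \rank (matP (Kz (Hn := Hn) (fun i => f (x i)) N)).
Proof.
have [e' [x' cx]] := cot_exists Hm hI xs.
have ex : exists r, is_rd f m n I N r.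
  exists (\rank (matP (Kz (Hn := Hn) (fun i => f (x' i)) N))).
  by apply/(is_rd_char Hn I fm hN); exists e', x'.
have := epsilon_spec (inhabits 0%N) _ ex; rewrite -/(rdq f m n I N).
case/(is_rd_char Hn I fm hN) => [e'' [x'' [cx'' ->]]].
exact: sf_core.
Qed.
Section ACC.
Variables (R : comUnitRingType) (noeth : noetherian R).

Lemma exists_max_over (I : R -> Prop) : proper_idealP I ->
  exists M, maximal_idealP M /\ forall a, I a -> M a.
Proof.
move=> hI; apply: NNPP => nM.
pose good (P J : R -> Prop) := [/\ proper_idealP J, (forall a, P a -> J a) & exists x, J x /\ ~ P x].
have step : forall P, proper_idealP P -> (forall a, I a -> P a) -> exists J, good P J.
  move=> P hP hIP; apply: NNPP => nJ; apply: nM; exists P; split => //; split => //.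
  move=> J hJ hPJ x Jx; apply: NNPP => nPx; apply: nJ; exists J; split => //; by exists x.
pose nextP (P : R -> Prop) := epsilon (inhabits I) (good P).
pose ch := fix ch k := if k is k'.+1 then nextP (ch k') else I.
have chP : forall k, proper_idealP (ch k) /\ forall a, I a -> ch k a.
  elim=> [|k [hk hIk]] //=.
  have := epsilon_spec (inhabits I) (good (ch k)) (step _ hk hIk).
  rewrite -/(nextP (ch k)) => -[hn hsub _]; split => // a /hIk; exact: hsub.
have chS : forall k, good (ch k) (ch k.+1).
  move=> k; have [hk hIk] := chP k.
  exact: (epsilon_spec (inhabits I) (good (ch k)) (step _ hk hIk)).
have mono : forall k k', (k <= k')%N -> forall a, ch k a -> ch k' a.
  move=> k k' /subnKC <-; elim: (k' - k)%N => [|d IH] a h; first by rewrite addn0.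
  rewrite addnS; case: (chS (k + d)%N) => _ hs _; exact/hs/IH.
pose U x := exists k, ch k x.
have hU : is_idealP U.
  split.
  - exists 0%N; case: (chP 0) => [[hi _] _]; exact: ideal0.
  - move=> x y [k hx] [k' hy]; exists (maxn k k'); apply: idealD.
    + by case: (chP (maxn k k')) => [[]].
    + by apply: mono hx; rewrite leq_maxl.
    + by apply: mono hy; rewrite leq_maxr.
  - move=> r x [k hx]; exists k; apply: idealMl => //; by case: (chP k) => [[]].
have [p [g [hg hspan]]] := noeth hU.
have [K hK] : exists K : 'I_p -> nat, forall i, ch (K i) (g i).
  have [G hG] := @fchoice _ _ 0%N (fun i k => ch k (g i)) hg; by exists G.
set Km := (\max_(i < p) K i)%N.
have hKm : forall x, U x -> ch Km x.
  move=> x /hspan [c ->]; apply: ideal_sum_big; first by case: (chP Km) => [[]].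
  move=> i; apply: idealMl; first by case: (chP Km) => [[]].
  apply: mono (hK i); exact: leq_bigmax.
case: (chS Km) => _ _ [x [hx nx]]; apply: nx; apply: hKm; by exists Km.+1.
Qed.

Lemma proper_sub_local (m : R -> Prop) (hloc : local_ring_with m) (I : R -> Prop) :
  proper_idealP I -> forall a, I a -> m a.
Proof.
move=> hI a Ia; have [M [hM hIM]] := exists_max_over hI.
case: hloc => _ hu; apply/(hu M hM); exact: hIM.
Qed.
End ACC.
Lemma basis0_exists (R : comUnitRingType) (m : R -> Prop) (Hm : maximal_idealP m)
  (noeth : noetherian R) : exists e (x : 'I_e -> R), cot_basis m (@zero_ideal R) x.
Proof.
have [k [g [hg hsp]]] := noeth m (n_ideal Hm).
have xs : spanning m (@zero_ideal R) g.
  split => // y my; have [c ->] := hsp y my; exists c; rewrite subrr.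
  exact: (ideal0 (Qn_ideal m (@zero_idealP _))).
exact: (cot_exists Hm (@zero_idealP _) xs).
Qed.

Lemma kz0 (R : comUnitRingType) (m : R -> Prop) (Hm : maximal_idealP m) e (x : 'I_e -> R)
  (cx : cot_basis m (@zero_ideal R) x) (k : 'rV[RF Hm]_e) : Kz (Hn := Hm) x (@zero_ideal _) k -> k = 0.
Proof.
case: cx => _ ind _ hk; apply/rowP => i; rewrite mxE.
have hi := ind (fun i => repr (k 0 i)).
have : m (repr (k 0 i)) by apply: hi; rewrite sum_comm; exact: hk.
by move/(red_eq0 Hm); rewrite redK.
Qed.

Lemma rank_kz0 (R : comUnitRingType) (m : R -> Prop) (Hm : maximal_idealP m) e (x : 'I_e -> R)
  (cx : cot_basis m (@zero_ideal R) x) : \rank (matP (Kz (Hn := Hm) x (@zero_ideal _))) = 0%N.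
Proof.
have hl := Kz_lin Hm (let: And3 h _ _ := cx in h) (@zero_idealP R).
have : (matP (Kz (Hn := Hm) x (@zero_ideal _)) <= (0 : 'M_e))%MS.
  apply/row_subP => i; rewrite submx0; apply/eqP; apply: (kz0 cx).
  apply/(matP_spec hl); exact: row_sub.
by rewrite submx0 => /eqP ->; exact: mxrank0.
Qed.

Lemma Qn_mono (T : comUnitRingType) (n N N' : T -> Prop) a :
  (forall b, N b -> N' b) -> Qn n N a -> Qn n N' a.
Proof. by move=> h [u [v [hu [hv ->]]]]; exists u, v; split => //; split => //; exact: h. Qed.

Lemma spanning_mono (R : comUnitRingType) (m I I' : R -> Prop) e (x : 'I_e -> R) :
  (forall a, I a -> I' a) -> spanning m I x -> spanning m I' x.
Proof.
move=> h [xm xsp]; split => // y my; have [a ha] := xsp y my; exists a.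
exact: Qn_mono ha.
Qed.

Lemma zero_sub (R : comUnitRingType) (I : R -> Prop) : is_idealP I -> forall a, (@zero_ideal _) a -> I a.
Proof. by move=> hI a ->; exact: ideal0. Qed.

Lemma preim_rank (F : fieldType) e g (G : 'M[F]_(e, g)) (P : 'rV[F]_e -> Prop) (W : 'M[F]_g) :
  lin_closed P -> (forall l, P l <-> (l *m G <= W)%MS) ->
  \rank (matP P) = (\rank (kermx G) + \rank (W :&: G))%N.
Proof.
move=> hP hPW; set M := matP P.
have spec := matP_spec hP.
have kerM : (kermx G <= M)%MS.
  apply/row_subP => i; apply/spec/hPW.
  by move/sub_kermxP: (row_sub i (kermx G)) => ->; exact: sub0mx.
have E : (M *m G == W :&: G)%MS.
  apply/andP; split.
  - rewrite sub_capmx submxMl andbT; apply/row_subP => i; rewrite row_mul.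
    by apply/hPW/spec; exact: row_sub.
  - apply/row_subP => i; set v := row i (W :&: G)%MS.
    have : (v <= W :&: G)%MS by exact: row_sub.
    rewrite sub_capmx => /andP [v1 /submxP [t vt]].
    rewrite vt; apply: submxMr; apply/spec/hPW; by rewrite -vt.
have r2 := mxrank_mul_ker M G.
by rewrite (capmx_idPr kerM) (eqmxP E) in r2; rewrite -r2 addnC.
Qed.

Lemma Wsum (S : comUnitRingType) (n : S -> Prop) (Hn : maximal_idealP n) g (y : 'I_g -> S)
  (cy : cot_basis n (@zero_ideal S) y) (N1 N2 : S -> Prop) (h1 : is_idealP N1) (h2 : is_idealP N2)
  (N2n : forall b, N2 b -> n b) (w : 'rV[RF Hn]_g) :
  Kz (Hn := Hn) y (ideal_sum N1 N2) w <->
  (w <= matP (Kz (Hn := Hn) y N1) + matP (Kz (Hn := Hn) y N2))%MS.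
Proof.
case: (cy) => ym _ ysp.
have h12 := ideal_sum_ideal h1 h2.
have s1 := Kz_spec (Hn := Hn) ym h1; have s2 := Kz_spec (Hn := Hn) ym h2.
have s12 := Kz_spec (Hn := Hn) ym h12.
have l12 := Kz_lin Hn ym h12.
split.
- move=> [a [b [ha [[j1 [j2 [hj1 [hj2 ->]]]] hw]]]].
  have [c hc] := ysp j2 (N2n _ hj2).
  have Qz1 := Qn_mono (n := n) (zero_sub h1) hc.
  have Qz2 := Qn_mono (n := n) (zero_sub h2) hc.
  have hv : (rowv Hn c <= matP (Kz (Hn := Hn) y N2))%MS.
    apply/s2/(Kz_any ym h2 (s := c)); first by move=> k; rewrite mxE.
    rewrite sum_comm; have -> : \sum_(i < g) c i * y i = j2 - (j2 - \sum_(i < g) c i * y i).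
      by rewrite opprB addrC subrK.
    by apply: idealB => //; [exact: Qn_ideal | exact: (ideal_sum_r (ideal_mul_ideal n n) hj2)].
  have hu : (w - rowv Hn c <= matP (Kz (Hn := Hn) y N1))%MS.
    apply/s1/(Kz_any ym h1 (s := fun k => repr (w 0 k) - c k)).
      by move=> k; rewrite redB redK !mxE.
    under eq_bigr do rewrite mulrBr.
    rewrite sumrB; move: hw; rewrite /Kz => hw.
    rewrite [X in X - _]hw [X in _ - X]sum_comm.
    rewrite -addrA -addrA; apply: idealD; first exact: Qn_ideal.
      exact: (ideal_sum_l h1 ha).
    apply: idealD; first exact: Qn_ideal.
      exact: (ideal_sum_r (ideal_mul_ideal n n) hj1).
    exact: Qz1.
  rewrite -(subrK (rowv Hn c) w); apply: addmx_sub.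
    exact: submx_trans hu (addsmxSl _ _).
  exact: submx_trans hv (addsmxSr _ _).
- case/sub_addsmxP => [[u1 u2] /= ->]; apply: (let: And3 _ hD _ := l12 in hD).
  + apply/s12; apply: submx_trans (submxMl u1 _) _; apply/row_subP => i.
    apply/s12; move/s1: (row_sub i (matP (Kz (Hn := Hn) y N1))); apply: Qn_mono => b hb.
    exact: (ideal_sum_l h2 hb).
  + apply/s12; apply: submx_trans (submxMl u2 _) _; apply/row_subP => i.
    apply/s12; move/s2: (row_sub i (matP (Kz (Hn := Hn) y N2))); apply: Qn_mono => b hb.
    exact: (ideal_sum_r h1 hb).
Qed.
From mathcomp Require Import zify.

Theorem proposition3p12
  (A B : comUnitRingType) (mA : A -> Prop) (nB : B -> Prop)
  (phi : {rmorphism A -> B})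
  (HA : local_ring_with mA) (HB : local_ring_with nB)
  (noethA : noetherian A) (noethB : noetherian B)
  (Hloc : forall a, mA a -> nB (phi a))
  (I : A -> Prop) (J : B -> Prop)
  (HI : proper_idealP I) (HJ : proper_idealP J)
  (HIJ : forall b, ideal_ext phi I b -> J b) :
  let IB := ideal_ext phi I in
  let mB := ideal_ext phi mA in
  let rd_phi := rdq phi mA nB (@zero_ideal A) (@zero_ideal B) in
  let rd_phiI := rdq phi mA nB I IB in
  let rd_phiIJ := rdq phi mA nB I J in
  let rd_piJIB := rdq id nB nB IB J in
  let rd_piJmB := rdq id nB nB mB (ideal_sum J mB) in
  let rd_piI := rdq id mA mA (@zero_ideal A) I in
  let rd_piIB := rdq id nB nB (@zero_ideal B) IB in
  (rd_phiI%:Z + rd_piJIB%:Z - rd_phiIJ%:Z = rd_piJmB%:Z) /\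
  (rd_phiIJ%:Z = rd_phiI%:Z + rd_piJIB%:Z - rd_piJmB%:Z) /\
  (rd_phiIJ%:Z = rd_phi%:Z - (rd_piI%:Z - rd_piIB%:Z) + rd_piJIB%:Z - rd_piJmB%:Z).
Proof.
move=> IB mB rd_phi rd_phiI rd_phiIJ rd_piJIB rd_piJmB rd_piI rd_piIB.
case: (HA) => HmA _; case: (HB) => HnB _.
have hmA := n_ideal HmA; have hnB := n_ideal HnB.
have hI := HI.1; have hJ := HJ.1.
have hzA := @zero_idealP A; have hzB := @zero_idealP B.
have ImA : forall a, I a -> mA a := proper_sub_local noethA HA HI.
have hIB : is_idealP IB := ideal_span_ideal _.
have hmB : is_idealP mB := ideal_span_ideal _.
have mBn : forall b, mB b -> nB b.
  apply: (ideal_span_min hnB) => _ [a [ha ->]]; exact: Hloc.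
have IBmB : forall b, IB b -> mB b.
  apply: (ideal_span_min hmB) => _ [a [ha ->]]; apply: ideal_span_sub; exists a; split => //.
  exact: ImA.
have phiIB : forall a, I a -> IB (phi a).
  by move=> a ha; apply: ideal_span_sub; exists a.
have [e [x cx]] := basis0_exists HmA noethA.
have [g [y cy]] := basis0_exists HnB noethB.
have [xm _ xsp0] := cx; have [ym _ ysp0] := cy.
have xs : forall I', is_idealP I' -> spanning mA I' x.
  move=> I' hI'; apply: spanning_mono (cot_spanning cx); exact: zero_sub.
have ys : forall N', is_idealP N' -> spanning nB N' y.
  move=> N' hN'; apply: spanning_mono (cot_spanning cy); exact: zero_sub.
have fz : forall a, (@zero_ideal A) a -> (@zero_ideal B) (phi a).
  by move=> a ->; rewrite rmorph0.
have phixn : forall i, nB (phi (x i)) by move=> i; apply: Hloc.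
have [al hal] : exists al : 'I_e -> 'I_g -> B,
    forall i, Qn nB (@zero_ideal B) (phi (x i) - \sum_(k < g) al i k * y k).
  have [h hh] := @fchoice _ _ (fun _ => 0)
    (fun i a => Qn nB (@zero_ideal B) (phi (x i) - \sum_(k < g) a k * y k))
    (fun i => ysp0 _ (phixn i)).
  by exists h.
pose G := \matrix_(i < e, k < g) red HnB (al i k).
pose W N := matP (Kz (Hn := HnB) y N).
have F2 : forall N, is_idealP N -> forall l : 'rV[RF HnB]_e,
    Kz (Hn := HnB) (fun i => phi (x i)) N l <-> (l *m G <= W N)%MS.
  move=> N hN l; rewrite -(Kz_spec (Hn := HnB) ym hN).
  set r := fun i => repr (l 0 i).
  have t : Qn nB N (\sum_(i < e) phi (x i) * r i - \sum_(k < g) y k * (\sum_(i < e) al i k * r i)) :=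
    transfer (f := idfun) (m := nB) (n := nB) (I := @zero_ideal B) (N := N) hN
      (fun a h => h) (zero_sub hN) hal r.
  have hs : forall k, red HnB (\sum_(i < e) al i k * r i) = (l *m G) 0 k.
    move=> k; rewrite red_sum mxE; apply: eq_bigr => i _; by rewrite redM redK mxE mulrC.
  rewrite (Kz_any ym hN hs); exact: Qn_cong2 hN t.
have rk_pre : forall N, is_idealP N ->
    \rank (matP (Kz (Hn := HnB) (fun i => phi (x i)) N)) = (\rank (kermx G) + \rank (W N :&: G))%N.
  move=> N hN; apply: preim_rank; [exact: Kz_lin | exact: F2].
have specW : forall N, is_idealP N -> forall w, Kz (Hn := HnB) y N w <-> (w <= W N)%MS.
  move=> N hN w; exact: Kz_spec.
have WmB : (W mB == G)%MS.
  apply/andP; split.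
  - apply/row_subP => i; set w := row i (W mB).
    have : Kz (Hn := HnB) y mB w by apply/specW => //; exact: row_sub.
    move=> [q [s [hq [[p [rr [gg [hgg ->]]]] hw]]]].
    have [aa haa] : exists aa : 'I_p -> A, forall j, mA (aa j) /\ gg j = phi (aa j).
      have [h hh] := @fchoice _ _ 0 (fun j a => mA a /\ gg j = phi a) hgg; by exists h.
    have [c hc] : exists c : 'I_p -> 'I_e -> A,
        forall j, Qn mA (@zero_ideal A) (aa j - \sum_(i < e) c j i * x i).
      have [h hh] := @fchoice _ _ (fun _ => 0)
        (fun j a => Qn mA (@zero_ideal A) (aa j - \sum_(i < e) a i * x i))
        (fun j => xsp0 _ (haa j).1).
      by exists h.
    have t1 := transfer (f := phi) (m := mA) (n := nB) (I := @zero_ideal A) (N := @zero_ideal B)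
      hzB Hloc fz hc rr.
    set u := fun i => \sum_(j < p) phi (c j i) * rr j.
    have t2 : Qn nB (@zero_ideal B) (\sum_(i < e) phi (x i) * u i
              - \sum_(k < g) y k * (\sum_(i < e) al i k * u i)) :=
      transfer (f := idfun) (m := nB) (n := nB) (I := @zero_ideal B) (N := @zero_ideal B) hzB
        (fun a h => h) (fun a h => h) hal u.
    set v := fun k => \sum_(i < e) al i k * u i.
    have hsv : forall k, red HnB (repr (w 0 k) - v k) = (w - rowv HnB u *m G) 0 k.
      move=> k; rewrite redB redK !mxE; congr (_ - _); rewrite red_sum; apply: eq_bigr => i0 _.
      by rewrite redM !mxE mulrC.
    have w0 : w - rowv HnB u *m G = 0.
      apply: (kz0 cy); apply/(Kz_any ym hzB hsv).
      under eq_bigr do rewrite mulrBr.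
      rewrite sumrB; move: hw; rewrite /Kz -/w => ->.
      have hQ := Qn_ideal nB hzB.
      have -> : \sum_(i < p) rr i * gg i = \sum_(j < p) phi (aa j) * rr j.
        by apply: eq_bigr => j _; rewrite (haa j).2 mulrC.
      set P1 := \sum_(j < p) phi (aa j) * rr j.
      set P2 := \sum_(i < e) phi (x i) * u i.
      set P3 := \sum_(k < g) y k * v k.
      have -> : q + P1 - P3 = q + ((P1 - P2) + (P2 - P3)) by rewrite [(P1 - P2) + _]addrA subrK addrA.
      apply: idealD => //; first exact: ideal_sum_l.
      by apply: idealD.
    have -> : w = rowv HnB u *m G by apply/eqP; rewrite -subr_eq0 w0.
    exact: submxMl.
  - apply/row_subP => i; rewrite -[G in row i G]mul1mx row_mul.
    apply/F2 => //; rewrite /Kz; apply: ideal_sum_r; first exact: ideal_mul_ideal.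
    apply: ideal_sum_big => // j; apply: idealMr => //.
    by apply: ideal_span_sub; exists (x j); split.
have WIB : (W IB <= G)%MS.
  apply: submx_trans (proj1 (andP WmB)); apply/row_subP => i.
  apply/specW => //; move/specW: (row_sub i (W IB)) => /(_ hIB); apply: Qn_mono; exact: IBmB.
have WJmB : (matP (Kz (Hn := HnB) y (ideal_sum J mB)) :=: W J + W mB)%MS.
  apply: matP_eqmx; first exact: Kz_lin (ideal_sum_ideal hJ hmB).
  move=> w; exact: Wsum.
have h1' : \rank (W (@zero_ideal B) :&: G) = 0%N.
  apply/eqP; rewrite -leqn0 -(rank_kz0 HnB cy); apply: mxrankS; exact: capmxSl.
set rho := \rank (matP (Kz (Hn := HmA) x I)).
have h1 : (rd_phi + \rank (matP (Kz (Hn := HmA) x (@zero_ideal A)))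
           = \rank (matP (Kz (Hn := HnB) (fun i => phi (x i)) (@zero_ideal B))))%N :=
  rdq_formula HmA HnB hzA hzB Hloc fz (xs _ hzA).
rewrite (rank_kz0 HmA cx) rk_pre // h1' in h1.
have h2 : (rd_phiI + rho = \rank (matP (Kz (Hn := HnB) (fun i => phi (x i)) IB)))%N :=
  rdq_formula HmA HnB hI hIB Hloc phiIB (xs _ hI).
rewrite rk_pre // (capmx_idPl WIB) in h2.
have h3 : (rd_phiIJ + rho = \rank (matP (Kz (Hn := HnB) (fun i => phi (x i)) J)))%N :=
  rdq_formula HmA HnB hI hJ Hloc (fun a h => HIJ _ (phiIB a h)) (xs _ hI).
rewrite rk_pre // in h3.
have h4 : (rd_piJIB + \rank (W IB) = \rank (W J))%N :=
  rdq_formula (f := idfun) HnB HnB hIB hJ (fun a h => h) HIJ (ys _ hIB).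
have h5 : (rd_piJmB + \rank (W mB) = \rank (matP (Kz (Hn := HnB) y (ideal_sum J mB))))%N :=
  rdq_formula (f := idfun) HnB HnB hmB (ideal_sum_ideal hJ hmB) (fun a h => h)
    (fun b h => ideal_sum_r hJ h) (ys _ hmB).
rewrite WJmB in h5.
have h6 : (rd_piI + \rank (matP (Kz (Hn := HmA) x (@zero_ideal A))) = rho)%N :=
  rdq_formula (f := idfun) HmA HmA hzA hI (fun a h => h) (zero_sub hI) (xs _ hzA).
rewrite (rank_kz0 HmA cx) in h6.
have h7 : (rd_piIB + \rank (W (@zero_ideal B)) = \rank (W IB))%N :=
  rdq_formula (f := idfun) HnB HnB hzB hIB (fun a h => h) (zero_sub hIB) (ys _ hzB).
rewrite (rank_kz0 HnB cy) in h7.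
have hs := mxrank_sum_cap (W J) (W mB).
have E := eqmxP WmB.
rewrite (cap_eqmx (eqmx_refl (W J)) E) in hs.
rewrite E in h5 hs.
split; first lia.
split; lia.
Qed.
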